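(* Let $\kappa$ be an uncountable regular cardinal. The following are equivalent: (1) $\diamondsuit_\kappa$ holds; (2) there is a joint diamond sequence of length $\kappa$ for $\kappa$; (3) there is a joint diamond sequence of length $2^\kappa$ for $\kappa$; (4) there exists a $\diamondsuit_\kappa$-tree.
   Context: A filter on $\kappa$ is normal if it is closed under diagonal intersections of $\kappa$-sequences of its members, and uniform if it contains all cobounded subsets of $\kappa$. A $\kappa$-list is a function $d\colon\kappa\to\mathcal{P}(\kappa)$ with $d(\alpha)\subseteq\alpha$ for all $\alpha$. A joint diamond sequence of length $\lambda$ for $\kappa$ is a sequence $\langle d_\alpha;\alpha<\lambda\rangle$ of $\kappa$-lists such that for every sequence $\langle a_\alpha;\alpha<\lambda\rangle$ of subsets of $\kappa$ there is a proper normal uniform filter $\mathcal{F}$ on $\kappa$ with $\{\xi<\kappa : d_\alpha(\xi)=a_\alpha\cap\xi\}\in\mathcal{F}$ for every $\alpha<\lambda$. A $\diamondsuit_\kappa$-tree is a function $D\colon {}^{<\kappa}2\to\mathcal{P}(\kappa)$ such that for every sequence $\langle a_s; s\in{}^\kappa 2\rangle$ of subsets of $\kappa$ there is a proper normal uniform filter on $\kappa$ containing all the sets $S_s=\{\xi<\kappa : D(s\restriction\xi)=a_s\cap\xi\}$, $s\in{}^\kappa2$. *)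

(* Defs.v *)
(* The cardinal kappa is represented by an abstract
   type K carrying a strict well-order lt (so elements of K are the ordinals
   xi < kappa, and {eta | lt eta xi} is the ordinal xi). *)
From Stdlib Require Import Wellfounded.

Set Implicit Arguments.

Section Card.
Variable K : Type.
Variable lt : K -> K -> Prop.

Definition injective_fun {A B : Type} (f : A -> B) : Prop :=
  forall x y, f x = f y -> x = y.

Definition strict_well_order : Prop :=
  (forall x, ~ lt x x) /\
  (forall x y z, lt x y -> lt y z -> lt x z) /\
  (forall x y, lt x y \/ x = y \/ lt y x) /\
  well_founded lt.

Definition segment (xi : K) : Type := {eta : K | lt eta xi}.

Definition is_cardinal : Prop :=
  forall xi : K, ~ exists f : K -> segment xi, injective_fun f.

Definition unbounded (X : K -> Prop) : Prop :=
  forall beta, exists xi, lt beta xi /\ X xi.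

Definition is_regular : Prop :=
  forall X : K -> Prop, unbounded X ->
    exists f : K -> {x : K | X x}, injective_fun f.

Definition is_uncountable : Prop :=
  ~ exists f : K -> nat, injective_fun f.

Definition uncountable_regular_cardinal : Prop :=
  strict_well_order /\ is_cardinal /\ is_regular /\ is_uncountable.

Definition closed_set (C : K -> Prop) : Prop :=
  forall xi, (exists beta, lt beta xi) ->
    (forall beta, lt beta xi -> exists gamma, lt beta gamma /\ lt gamma xi /\ C gamma) ->
    C xi.

Definition club (C : K -> Prop) : Prop := closed_set C /\ unbounded C.

Definition stationary (S : K -> Prop) : Prop :=
  forall C, club C -> exists xi, C xi /\ S xi.

Definition guesses_at (d a : K -> Prop) (xi : K) : Prop :=
  forall eta, d eta <-> (a eta /\ lt eta xi).

Definition kappa_list (d : K -> K -> Prop) : Prop :=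
  forall xi eta, d xi eta -> lt eta xi.

Definition diamond : Prop :=
  exists d : K -> K -> Prop, kappa_list d /\
    forall a : K -> Prop, stationary (fun xi => guesses_at (d xi) a xi).

Definition is_filter (F : (K -> Prop) -> Prop) : Prop :=
  F (fun _ => True) /\
  (forall X Y : K -> Prop, (forall x, X x -> Y x) -> F X -> F Y) /\
  (forall X Y : K -> Prop, F X -> F Y -> F (fun x => X x /\ Y x)).

Definition proper_filter (F : (K -> Prop) -> Prop) : Prop :=
  ~ F (fun _ => False).

Definition normal_filter (F : (K -> Prop) -> Prop) : Prop :=
  forall X : K -> K -> Prop, (forall alpha, F (X alpha)) ->
    F (fun xi => forall alpha, lt alpha xi -> X alpha xi).

Definition uniform_filter (F : (K -> Prop) -> Prop) : Prop :=
  forall Y : K -> Prop, (exists beta, forall xi, ~ Y xi -> lt xi beta) -> F Y.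

Definition proper_normal_uniform_filter (F : (K -> Prop) -> Prop) : Prop :=
  is_filter F /\ proper_filter F /\ normal_filter F /\ uniform_filter F.

(* joint diamond sequence of length lambda, the length being the cardinality
   of the index type I *)
Definition joint_diamond_sequence (I : Type) (d : I -> K -> K -> Prop) : Prop :=
  (forall alpha, kappa_list (d alpha)) /\
  forall a : I -> K -> Prop,
    exists F, proper_normal_uniform_filter F /\
      forall alpha, F (fun xi => guesses_at (d alpha xi) (a alpha) xi).

Definition has_joint_diamond (I : Type) : Prop :=
  exists d : I -> K -> K -> Prop, joint_diamond_sequence d.

(* the tree ^{<kappa} 2 : pairs (xi, s) with s : xi -> 2 *)
Definition node : Type := {xi : K & segment xi -> bool}.

Definition restr (s : K -> bool) (xi : K) : node :=
  existT (fun xi => segment xi -> bool) xi (fun eta => s (proj1_sig eta)).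

Definition diamond_tree (D : node -> K -> Prop) : Prop :=
  forall a : (K -> bool) -> K -> Prop,
    exists F, proper_normal_uniform_filter F /\
      forall s : K -> bool, F (fun xi => guesses_at (D (restr s xi)) (a s) xi).

Definition has_diamond_tree : Prop :=
  exists D : node -> K -> Prop, diamond_tree D.

End Card.

(* Main.v *)
Require Import Defs.
From Stdlib Require Import Classical ClassicalEpsilon FunctionalExtensionality ProofIrrelevance List Lia.

Section Main.
Variable K : Type.
Variable lt : K -> K -> Prop.
Hypothesis irr : forall x, ~ lt x x.
Hypothesis trans : forall x y z, lt x y -> lt y z -> lt x z.
Hypothesis tri : forall x y, lt x y \/ x = y \/ lt y x.
Hypothesis wf : well_founded lt.
Hypothesis card : is_cardinal lt.
Hypothesis reg : is_regular lt.
Hypothesis unc : @is_uncountable K.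

Definition choose {A : Type} {P : A -> Prop} (H : exists x, P x) : A :=
  proj1_sig (constructive_indefinite_description P H).
Lemma choose_spec {A : Type} {P : A -> Prop} (H : exists x, P x) : P (choose H).
Proof. unfold choose. destruct (constructive_indefinite_description P H); auto. Qed.

Lemma inhK : exists x : K, True.
Proof.
  apply NNPP; intro H. apply unc. exists (fun _ => 0).
  intros x. exfalso; apply H; exists x; auto.
Qed.
Definition k0 : K := choose inhK.

Lemma fresh_ex : forall l : list K, exists x, ~ In x l.
Proof.
  intro l. apply NNPP; intro H. apply unc.
  assert (Hin : forall x, In x l) by (intro x; apply NNPP; intro; apply H; eauto).
  assert (Hn : forall x, exists n, nth_error l n = Some x).
  { intro x. apply In_nth_error. auto. }
  exists (fun x => choose (Hn x)).
  intros x y E. pose proof (choose_spec (Hn x)) as A. pose proof (choose_spec (Hn y)) as B.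
  rewrite E in A. congruence.
Qed.

Fixpoint chain (m : K) (n : nat) : list K :=
  match n with
  | O => m :: nil
  | S n' => choose (fresh_ex (chain m n')) :: chain m n'
  end.
Definition ech (m : K) (n : nat) : K := hd m (chain m n).

Lemma chain_incl : forall m n k, In (ech m n) (chain m (n + k)).
Proof.
  intros m n k. induction k.
  - rewrite PeanoNat.Nat.add_0_r. destruct n; simpl; unfold ech; simpl; auto.
  - rewrite PeanoNat.Nat.add_succ_r. simpl. auto.
Qed.

Lemma ech_inj : forall m a b, ech m a = ech m b -> a = b.
Proof.
  intros m.
  assert (H : forall a b, a < b -> ech m a <> ech m b).
  { intros a b Hab E. destruct b as [|b]; [inversion Hab|].
    assert (Hf := choose_spec (fresh_ex (chain m b))).
    unfold ech in E at 2. simpl in E. apply Hf. rewrite <- E.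
    assert (Eb : b = a + (b - a)) by lia.
    rewrite Eb. apply chain_incl. }
  intros a b E. destruct (PeanoNat.Nat.lt_trichotomy a b) as [h|[h|h]]; auto.
  - exfalso; eapply H; eauto.
  - exfalso; eapply H; eauto.
Qed.

Lemma nomax : forall b, exists x, lt b x.
Proof.
  intro m. apply NNPP; intro H.
  assert (Hle : forall x, x <> m -> lt x m).
  { intros x Hx. destruct (tri x m) as [h|[h|h]]; auto. congruence. exfalso; eauto. }
  apply (card m).
  assert (Hs : forall x, (exists n, ech m n = x) -> exists n, ech m n = x) by auto.
  set (phi := fun x => match excluded_middle_informative (exists n, ech m n = x) with
                       | left h => ech m (S (choose h))
                       | right _ => x end).
  assert (Hphi : forall x, lt (phi x) m).
  { intro x. unfold phi. destruct excluded_middle_informative as [h|h].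
    - apply Hle. intro E. apply (ech_inj m (S (choose h)) 0) in E. discriminate.
    - apply Hle. intro E. apply h. exists 0. rewrite E. reflexivity. }
  exists (fun x => exist _ (phi x) (Hphi x)).
  intros x y E. injection E. clear E. unfold phi.
  destruct excluded_middle_informative as [h|h]; destruct excluded_middle_informative as [h'|h'].
  - intro E. apply ech_inj in E. injection E. intro E'.
    rewrite <- (choose_spec h), <- (choose_spec h'). rewrite E'. reflexivity.
  - intro E. exfalso. apply h'. eauto.
  - intro E. exfalso. apply h. eauto.
  - auto.
Qed.

Lemma ub2 : forall a b, exists x, lt a x /\ lt b x.
Proof.
  intros a b. destruct (tri a b) as [h|[h|h]].
  - destruct (nomax b) as [x Hx]. exists x. eauto.
  - subst. destruct (nomax b) as [x Hx]. eauto.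
  - destruct (nomax a) as [x Hx]. exists x. eauto.
Qed.
Definition ubf (a b : K) : K := choose (ub2 a b).
Lemma ubf_l : forall a b, lt a (ubf a b).
Proof. intros. exact (proj1 (choose_spec (ub2 a b))). Qed.
Lemma ubf_r : forall a b, lt b (ubf a b).
Proof. intros. exact (proj2 (choose_spec (ub2 a b))). Qed.

Lemma SL : forall (beta : K) (g : K -> K), exists b, forall x, lt x beta -> lt (g x) b.
Proof.
  intros beta g. apply NNPP; intro H.
  assert (Hu : unbounded lt (fun y => exists x, lt x beta /\ g x = y)).
  { intro b. destruct (nomax b) as [b' Hb'].
    apply NNPP; intro H2. apply H. exists b'. intros x Hx.
    destruct (tri (g x) b') as [h|[h|h]]; auto; exfalso; apply H2; exists (g x); split; eauto.
    subst; auto. }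
  destruct (reg _ Hu) as [f Hf].
  apply (card beta).
  exists (fun k => exist _ (choose (proj2_sig (f k))) (proj1 (choose_spec (proj2_sig (f k))))).
  intros x y E. apply Hf. injection E. intro E'.
  pose proof (proj2 (choose_spec (proj2_sig (f x)))) as A.
  pose proof (proj2 (choose_spec (proj2_sig (f y)))) as B.
  apply eq_sig_hprop; [intros; apply proof_irrelevance|]. congruence.
Qed.

Definition bnd (beta : K) (g : K -> K) : K := choose (SL beta g).
Lemma bnd_spec : forall beta g x, lt x beta -> lt (g x) (bnd beta g).
Proof. intros. exact (choose_spec (SL beta g) x H). Qed.

Lemma SL2 : forall (beta : K) (g : K -> K -> K), exists b, forall x y, lt x beta -> lt y beta -> lt (g x y) b.
Proof.
  intros beta g. exists (bnd beta (fun x => bnd beta (g x))).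
  intros x y Hx Hy. eapply trans. apply bnd_spec. exact Hy.
  apply (bnd_spec beta (fun x => bnd beta (g x))). auto.
Qed.

Lemma le_lt_trans : forall a b c, ~ lt b a -> lt b c -> lt a c.
Proof. intros a b c H1 H2. destruct (tri a b) as [h|[h|h]]; [eauto|subst; auto|contradiction]. Qed.

Lemma SLw : forall (u : nat -> K), exists b, forall n, lt (u n) b.
Proof.
  intros u. apply NNPP; intro H.
  assert (Hu : unbounded lt (fun y => exists n, u n = y)).
  { intro b. apply NNPP; intro H2. apply H. destruct (nomax b) as [b' Hb']. exists b'. intros n.
    apply le_lt_trans with b; auto. intro h. apply H2. exists (u n); eauto. }
  destruct (reg _ Hu) as [f Hf]. apply unc.
  exists (fun k => choose (proj2_sig (f k))).
  intros x y E. apply Hf. apply eq_sig_hprop; [intros; apply proof_irrelevance|].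
  rewrite <- (choose_spec (proj2_sig (f x))), <- (choose_spec (proj2_sig (f y))). rewrite E. reflexivity.
Qed.

Lemma wf_min : forall P : K -> Prop, (exists x, P x) -> exists x, P x /\ forall y, P y -> ~ lt y x.
Proof.
  intros P [x Hx]. revert Hx. induction (wf x) as [x _ IH]. intro Hx.
  destruct (classic (exists y, P y /\ lt y x)) as [[y [Hy1 Hy2]]|Hn].
  - eapply IH; eauto.
  - exists x. split; auto. intros y Hy Hl. apply Hn; eauto.
Qed.

Fixpoint useq (F : K -> K) (b0 : K) (n : nat) : K :=
  match n with
  | O => b0
  | S n' => ubf (bnd (useq F b0 n') F) (useq F b0 n')
  end.

Lemma club_closure : forall (F : K -> K) (beta : K),
  club lt (fun xi => lt beta xi /\ forall g, lt g xi -> lt (F g) xi).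
Proof.
  intros F beta. split.
  - intros xi [b0 Hb0] Hc. split.
    + destruct (Hc b0 Hb0) as [g [_ [Hg [Hg1 _]]]]. eauto.
    + intros g Hg. destruct (Hc g Hg) as [g' [H1 [H2 [_ H3]]]]. eauto.
  - intros b0. set (u := useq F (ubf b0 beta)).
    assert (Hinc : forall n, lt (u n) (u (S n))) by (intro n; apply ubf_r).
    assert (HF : forall n g, lt g (u n) -> lt (F g) (u (S n))).
    { intros n g Hg. eapply trans. apply bnd_spec. exact Hg. apply ubf_l. }
    destruct (wf_min (fun x => forall n, lt (u n) x) (SLw u)) as [xi [Hxi Hmin]].
    exists xi. split; [|split].
    + eapply trans. apply (ubf_l b0 beta). apply (Hxi 0).
    + eapply trans. apply (ubf_r b0 beta). apply (Hxi 0).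
    + intros g Hg. assert (Hn : exists n, ~ lt (u n) g).
      { apply NNPP; intro Hn. apply (Hmin g); auto. intro n. apply NNPP; intro h; apply Hn; eauto. }
      destruct Hn as [n Hn]. eapply trans. apply (HF (S n)).
      apply le_lt_trans with (u n); auto. apply Hxi.
Qed.

Lemma cobounded_gt : forall b (F : (K -> Prop) -> Prop), uniform_filter lt F -> F (fun xi => lt b xi).
Proof.
  intros b F HU. apply HU. destruct (nomax b) as [b' Hb']. exists b'. intros xi Hxi.
  apply le_lt_trans with b; auto.
Qed.

Lemma club_in_filter : forall F, proper_normal_uniform_filter lt F -> forall C, club lt C -> F C.
Proof.
  intros F [[HT [Hmon Hint]] [Hp [Hn Hu]]] C [Hcl Hub].
  set (c := fun a => choose (Hub a)).
  assert (Hc : forall a, lt a (c a) /\ C (c a)) by (intro a; exact (choose_spec (Hub a))).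
  assert (H1 := Hn (fun a xi => lt (c a) xi) (fun a => cobounded_gt (c a) F Hu)).
  assert (H2 := Hint _ _ H1 (cobounded_gt k0 F Hu)).
  eapply Hmon; [|exact H2]. simpl. intros xi [Hd Hk]. apply Hcl.
  - eauto.
  - intros b Hb. exists (c b). destruct (Hc b). auto.
Qed.

Lemma filter_stationary : forall F, proper_normal_uniform_filter lt F -> forall S, F S -> stationary lt S.
Proof.
  intros F HF S HS C HC. pose proof (club_in_filter F HF C HC) as HC'.
  destruct HF as [[HT [Hmon Hint]] [Hp _]].
  apply NNPP; intro H. apply Hp. eapply Hmon; [|exact (Hint _ _ HC' HS)].
  simpl. intros x [h1 h2]. apply H; eauto.
Qed.

Lemma jd_diamond : forall (I : Type) (i0 : I), has_joint_diamond lt I -> diamond lt.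
Proof.
  intros I i0 [d [Hl Hd]]. exists (d i0). split; auto.
  intro a. destruct (Hd (fun _ => a)) as [F [HF HS]]. eapply filter_stationary; eauto.
Qed.

Lemma tree_jd2 : has_diamond_tree lt -> has_joint_diamond lt (K -> bool).
Proof.
  intros [D HD]. exists (fun s xi eta => D (restr lt s xi) eta /\ lt eta xi). split.
  - intros s xi eta [_ h]; auto.
  - intro a. destruct (HD a) as [F [HF HS]]. exists F. split; auto.
    intro s. destruct HF as [[_ [Hmon _]] _]. eapply Hmon; [|apply (HS s)].
    unfold guesses_at. intros xi Hg eta. rewrite (Hg eta). tauto.
Qed.

Definition ek (a : K) : K -> bool := fun y => if excluded_middle_informative (y = a) then true else false.
Lemma ek_inj : forall a b, ek a = ek b -> a = b.
Proof.
  intros a b E. assert (h := f_equal (fun f => f b) E). unfold ek in h. simpl in h.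
  destruct excluded_middle_informative; destruct excluded_middle_informative; congruence.
Qed.

Lemma tree_jd1 : has_diamond_tree lt -> has_joint_diamond lt K.
Proof.
  intros [D HD]. exists (fun a xi eta => D (restr lt (ek a) xi) eta /\ lt eta xi). split.
  - intros s xi eta [_ h]; auto.
  - intro a. destruct (HD (fun s eta => exists b, ek b = s /\ a b eta)) as [F [HF HS]]. exists F. split; auto.
    intro b. destruct HF as [[_ [Hmon _]] _]. eapply Hmon; [|apply (HS (ek b))].
    unfold guesses_at. intros xi Hg eta. rewrite (Hg eta). split.
    + intros [[[b' [E H]] Hl] _]. apply ek_inj in E. subst. auto.
    + intros [H Hl]. eauto.
Qed.

Definition mx (x y : K) : K := if excluded_middle_informative (lt x y) then y else x.
Lemma mx_l : forall x y, ~ lt (mx x y) x.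
Proof. intros x y. unfold mx. destruct excluded_middle_informative as [h|h]; auto. intro h'. apply (irr x); eauto. Qed.
Lemma mx_r : forall x y, ~ lt (mx x y) y.
Proof. intros x y. unfold mx. destruct excluded_middle_informative as [h|h]; auto. Qed.
Lemma mx_cases : forall x y, mx x y = x \/ mx x y = y.
Proof. intros. unfold mx. destruct excluded_middle_informative; auto. Qed.

Definition Gd (q p : K * K) : Prop :=
  lt (mx (fst q) (snd q)) (mx (fst p) (snd p)) \/
  (mx (fst q) (snd q) = mx (fst p) (snd p) /\ (lt (fst q) (fst p) \/ (fst q = fst p /\ lt (snd q) (snd p)))).

Lemma Gd_wf : well_founded Gd.
Proof.
  assert (H : forall m a b, mx a b = m -> Acc Gd (a, b)).
  { intro m. induction (wf m) as [m _ IHm]. intro a. induction (wf a) as [a _ IHa].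
    intro b. induction (wf b) as [b _ IHb]. intro Hm. constructor.
    intros [a' b'] HG. unfold Gd in HG; simpl in HG. rewrite Hm in HG.
    destruct HG as [h|[h [h'|[h1 h2]]]].
    - eapply IHm; eauto.
    - eapply IHa; eauto.
    - subst a'. apply IHb; auto. }
  intros [a b]. eapply H; eauto.
Qed.

Lemma Gd_tri : forall p q, p <> q -> Gd p q \/ Gd q p.
Proof.
  intros [a b] [a' b'] Hne. unfold Gd; simpl.
  destruct (tri (mx a b) (mx a' b')) as [h|[h|h]]; [left; left; exact h| |right; left; exact h].
  destruct (tri a a') as [h1|[h1|h1]]; [left; right; split; [exact h|left; exact h1]| |right; right; split; [symmetry; exact h|left; exact h1]].
  subst a'. destruct (tri b b') as [h2|[h2|h2]]; [left; right; split; [exact h|right; split; auto]| |right; right; split; [symmetry; exact h|right; split; auto]]. subst; congruence.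
Qed.

Lemma Gd_sq : forall q p, Gd q p -> ~ lt (mx (fst p) (snd p)) (fst q) /\ ~ lt (mx (fst p) (snd p)) (snd q).
Proof.
  intros q p H. assert (Hq : ~ lt (mx (fst p) (snd p)) (mx (fst q) (snd q))).
  { destruct H as [h|[h _]]. intro h'. apply (irr (mx (fst q) (snd q))); eauto. rewrite h. apply irr. }
  split; intro h; apply Hq.
  - destruct (tri (fst q) (mx (fst q) (snd q))) as [a|[a|a]]; [eauto| rewrite <- a; auto| exfalso; exact (mx_l _ _ a)].
  - destruct (tri (snd q) (mx (fst q) (snd q))) as [a|[a|a]]; [eauto| rewrite <- a; auto| exfalso; exact (mx_r _ _ a)].
Qed.

Lemma step_ex : forall p (rec : forall q, Gd q p -> K), exists b, forall q (H : Gd q p), lt (rec q H) b.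
Proof.
  intros p rec. destruct (nomax (mx (fst p) (snd p))) as [beta Hb].
  set (g2 := fun x y => match excluded_middle_informative (Gd (x, y) p) with
                       | left h => rec (x, y) h | right _ => k0 end).
  destruct (SL2 beta g2) as [b Hb2]. exists b. intros [x y] H.
  destruct (Gd_sq _ _ H) as [H1 H2]. simpl in H1, H2.
  specialize (Hb2 x y (le_lt_trans _ _ _ H1 Hb) (le_lt_trans _ _ _ H2 Hb)).
  unfold g2 in Hb2. destruct excluded_middle_informative as [h|h]; [|contradiction].
  rewrite (proof_irrelevance _ H h). auto.
Qed.

Definition cstep (p : K * K) (rec : forall q, Gd q p -> K) : K := choose (step_ex p rec).

Definition cp : K * K -> K := Fix Gd_wf (fun _ => K) cstep.

Lemma cp_mono : forall q p, Gd q p -> lt (cp q) (cp p).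
Proof.
  intros q p H. unfold cp at 2. rewrite Fix_eq.
  - unfold cstep. exact (choose_spec (step_ex p _) q H).
  - intros x f g Hfg. assert (E : f = g).
    { apply functional_extensionality_dep. intro y. apply functional_extensionality_dep. intro h. apply Hfg. }
    rewrite E. reflexivity.
Qed.

Definition c (x y : K) : K := cp (x, y).
Lemma c_inj : forall x y x' y', c x y = c x' y' -> x = x' /\ y = y'.
Proof.
  intros x y x' y' E. destruct (classic ((x, y) = (x', y'))) as [h|h].
  - injection h; auto.
  - exfalso. unfold c in E. destruct (Gd_tri _ _ h) as [g|g]; apply cp_mono in g; rewrite E in g; apply (irr _ g).
Qed.

Definition t1 : K := choose (nomax k0).
Lemma k0_t1 : lt k0 t1.
Proof. exact (choose_spec (nomax k0)). Qed.

Definition dec (z : K) : K * K :=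
  match excluded_middle_informative (exists p : K * K, c (fst p) (snd p) = z) with
  | left h => choose h
  | right _ => (k0, k0) end.
Lemma dec_spec : forall x y, dec (c x y) = (x, y).
Proof.
  intros x y. unfold dec. destruct excluded_middle_informative as [h|h].
  - pose proof (choose_spec h) as E. destruct (choose h) as [x' y']. simpl in E.
    apply c_inj in E. destruct E; subst; auto.
  - exfalso. apply h. exists (x, y). reflexivity.
Qed.

Definition sqb (h : K -> K -> K) (g : K) : K := choose (SL2 (choose (nomax g)) h).
Lemma sq_use : forall h xi, (forall g, lt g xi -> lt (sqb h g) xi) ->
  forall x y, lt x xi -> lt y xi -> lt (h x y) xi.
Proof.
  intros h xi Hs x y Hx Hy. set (m := mx x y).
  assert (Hm : lt m xi) by (destruct (mx_cases x y) as [e|e]; unfold m; rewrite e; auto).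
  eapply trans; [|apply (Hs m Hm)]. unfold sqb.
  pose proof (choose_spec (nomax m)) as Hb.
  apply (choose_spec (SL2 (choose (nomax m)) h)).
  - apply le_lt_trans with m; auto. apply mx_l.
  - apply le_lt_trans with m; auto. apply mx_r.
Qed.

Section Filt.
Variable S : (K -> bool) -> K -> Prop.

Definition E (g : K -> (K -> bool)) (f : K -> K) (xi : K) : Prop :=
  lt k0 xi /\ forall γ, lt γ xi -> lt (f γ) xi /\ S (g γ) xi.

Definition Fl (X : K -> Prop) : Prop := exists g f, forall xi, E g f xi -> X xi.

Lemma diagE : forall (G : K -> K -> (K -> bool)) (Fm : K -> K -> K),
  exists g f, forall xi, E g f xi -> lt t1 xi /\ forall a, lt a xi -> E (G a) (Fm a) xi.
Proof.
  intros G Fm.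
  exists (fun z => G (fst (dec z)) (snd (dec z))).
  exists (fun z => ubf (ubf (sqb c z) t1) (Fm (fst (dec z)) (snd (dec z)))).
  intros xi [Hk HE].
  assert (Hf : forall z, lt z xi -> lt (ubf (ubf (sqb c z) t1) (Fm (fst (dec z)) (snd (dec z)))) xi)
    by (intros z Hz; exact (proj1 (HE z Hz))).
  assert (Hcl : forall x y, lt x xi -> lt y xi -> lt (c x y) xi).
  { apply sq_use. intros z Hz. eapply trans; [|apply (Hf z Hz)]. eapply trans; [apply ubf_l|apply ubf_l]. }
  split.
  - eapply trans; [|apply (Hf k0 Hk)]. eapply trans; [apply ubf_r|apply ubf_l].
  - intros a Ha. split; auto. intros γ Hγ.
    pose proof (Hcl a γ Ha Hγ) as Hz. destruct (HE _ Hz) as [H1 H2].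
    rewrite dec_spec in H1, H2. simpl in H1, H2. split; auto.
    eapply trans; [apply ubf_r|exact H1].
Qed.

Lemma Fl_filter : (forall g f, exists xi, E g f xi) ->
  proper_normal_uniform_filter lt Fl /\ forall s, Fl (S s).
Proof.
  intros Hp. split; [split; [split; [|split]|split; [|split]]|].
  - exists (fun _ _ => true), (fun x => x). auto.
  - intros X Y HXY [g [f H]]. exists g, f. auto.
  - intros X Y [g1 [f1 H1]] [g2 [f2 H2]].
    destruct (diagE (fun a => if excluded_middle_informative (a = k0) then g1 else g2)
                    (fun a => if excluded_middle_informative (a = k0) then f1 else f2)) as [g [f H]].
    exists g, f. intros xi HE. destruct (H xi HE) as [Ht Ha]. split.
    + apply H1. pose proof (Ha k0 (proj1 HE)) as e. destruct excluded_middle_informative; [exact e|congruence].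
    + apply H2. pose proof (Ha t1 Ht) as e. destruct excluded_middle_informative as [h|h]; [|exact e].
      exfalso. pose proof k0_t1 as kt. rewrite h in kt. exact (irr _ kt).
  - intros [g [f H]]. destruct (Hp g f) as [xi Hxi]. exact (H xi Hxi).
  - intros X HX.
    assert (HX' : forall a, exists gf : (K -> K -> bool) * (K -> K), forall xi, E (fst gf) (snd gf) xi -> X a xi).
    { intro a. destruct (HX a) as [g [f H]]. exists (g, f). exact H. }
    destruct (diagE (fun a => fst (choose (HX' a))) (fun a => snd (choose (HX' a)))) as [g [f H]].
    exists g, f. intros xi HE a Ha. apply (choose_spec (HX' a)). apply (proj2 (H xi HE) a Ha).
  - intros Y [b Hb]. exists (fun _ _ => true), (fun _ => b). intros xi [Hk HE].
    apply NNPP; intro h. apply Hb in h. destruct (HE k0 Hk) as [h' _]. apply (irr xi); eauto.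
  - intros s. exists (fun _ => s), (fun x => x). intros xi [Hk HE]. exact (proj2 (HE k0 Hk)).
Qed.
End Filt.

Definition Dtree (d : K -> K -> Prop) (t : node lt) : K -> Prop :=
  match t with existT _ xi sg => fun eta => lt eta xi /\ exists g, lt g xi /\
     (forall e (H : lt e xi), sg (exist _ e H) = true <-> d xi (c g (c e t1))) /\
     d xi (c g (c eta k0)) end.

Lemma bool_iff_eq : forall b b' : bool, (b = true <-> b' = true) -> b = b'.
Proof. intros [|] [|] H; auto; [symmetry|]; apply H; auto. Qed.

Lemma diamond_to_tree : diamond lt -> has_diamond_tree lt.
Proof.
  intros [d [_ Hd]]. exists (Dtree d). intro a.
  set (S := fun s xi => guesses_at lt (Dtree d (restr lt s xi)) (a s) xi).
  assert (Hp : forall g f, exists xi, E S g f xi).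
  2:{ destruct (Fl_filter S Hp) as [H1 H2]. exists (Fl S). auto. }
  intros g f.
  set (A := fun z => exists γ η, (z = c γ (c η k0) /\ a (g γ) η) \/ (z = c γ (c η t1) /\ g γ η = true)).
  assert (kt : k0 <> t1) by (intro h; pose proof k0_t1 as kt; rewrite h in kt; exact (irr _ kt)).
  assert (A0 : forall x e, A (c x (c e k0)) <-> a (g x) e).
  { intros x e. split.
    - intros [x' [e' [[E1 H]|[E1 H]]]]; apply c_inj in E1; destruct E1 as [<- E1]; apply c_inj in E1;
        destruct E1 as [<- E1]; [auto|congruence].
    - intro H. exists x, e. auto. }
  assert (A1 : forall x e, A (c x (c e t1)) <-> g x e = true).
  { intros x e. split.
    - intros [x' [e' [[E1 H]|[E1 H]]]]; apply c_inj in E1; destruct E1 as [<- E1]; apply c_inj in E1;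
        destruct E1 as [<- E1]; [congruence|auto].
    - intro H. exists x, e. auto. }
  assert (Hdx : forall x y, g x <> g y -> exists e, g x e <> g y e).
  { intros x y Hne. apply NNPP; intro h. apply Hne. apply functional_extensionality. intro e.
    apply NNPP; intro h'; apply h; eauto. }
  set (δ := fun x y => match excluded_middle_informative (g x <> g y) with
                      | left h => choose (Hdx x y h) | right _ => k0 end).
  assert (Hδ : forall x y, g x <> g y -> g x (δ x y) <> g y (δ x y)).
  { intros x y h. unfold δ. destruct excluded_middle_informative as [h'|h']; [|contradiction].
    exact (choose_spec (Hdx x y h')). }
  set (Fb := fun γ => ubf (ubf (ubf (f γ) (sqb c γ)) (sqb δ γ)) t1).
  destruct (Hd A _ (club_closure Fb k0)) as [xi [[Hk HF] Hg]].
  assert (Hf : forall γ, lt γ xi -> lt (f γ) xi).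
  { intros γ h. eapply trans; [|apply (HF γ h)]. unfold Fb.
    eapply trans; [apply ubf_l|]. eapply trans; [apply ubf_l|]. apply ubf_l. }
  assert (Hc : forall x y, lt x xi -> lt y xi -> lt (c x y) xi).
  { apply sq_use. intros γ h. eapply trans; [|apply (HF γ h)]. unfold Fb.
    eapply trans; [apply ubf_r|]. eapply trans; [apply ubf_l|]. apply ubf_l. }
  assert (Hδc : forall x y, lt x xi -> lt y xi -> lt (δ x y) xi).
  { apply sq_use. intros γ h. eapply trans; [|apply (HF γ h)]. unfold Fb.
    eapply trans; [apply ubf_r|]. apply ubf_l. }
  assert (Ht1 : lt t1 xi).
  { eapply trans; [|apply (HF k0 Hk)]. apply ubf_r. }
  assert (D0 : forall x e, lt x xi -> lt e xi -> (d xi (c x (c e k0)) <-> a (g x) e)).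
  { intros x e hx he. rewrite (Hg _). rewrite A0. split; [tauto|]. intro; split; auto. }
  assert (D1 : forall x e, lt x xi -> lt e xi -> (d xi (c x (c e t1)) <-> g x e = true)).
  { intros x e hx he. rewrite (Hg _). rewrite A1. split; [tauto|]. intro; split; auto. }
  exists xi. split; auto. intros γ hγ. split; auto.
  unfold S, guesses_at. intro eta. simpl. split.
  - intros [he [γ' [hγ' [Hm Ha]]]]. split; auto.
    rewrite D0 in Ha; auto.
    assert (Eg : g γ = g γ').
    { apply NNPP; intro hne. apply (Hδ _ _ hne). apply bool_iff_eq.
      pose proof (Hδc γ γ' hγ hγ') as hd.
      rewrite (Hm _ hd). apply D1; auto. }
    rewrite Eg. exact Ha.
  - intros [Ha he]. split; auto. exists γ. split; auto. split.
    + intros e H. simpl. rewrite D1; auto. tauto.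
    + rewrite D0; auto.
Qed.

Lemma main_eq : (diamond lt <-> has_joint_diamond lt K) /\
  (diamond lt <-> has_joint_diamond lt (K -> bool)) /\
  (diamond lt <-> has_diamond_tree lt).
Proof.
  split; [|split]; split.
  - intro h. apply tree_jd1, diamond_to_tree; auto.
  - apply (jd_diamond K k0).
  - intro h. apply tree_jd2, diamond_to_tree; auto.
  - apply (jd_diamond (K -> bool) (fun _ => true)).
  - apply diamond_to_tree.
  - intro h. apply (jd_diamond (K -> bool) (fun _ : K => true)). apply tree_jd2; auto.
Qed.

End Main.

Theorem theorem5p8 (K : Type) (lt : K -> K -> Prop)
  (Hkappa : uncountable_regular_cardinal lt) :
  (diamond lt <-> has_joint_diamond lt K) /\
  (diamond lt <-> has_joint_diamond lt (K -> bool)) /\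
  (diamond lt <-> has_diamond_tree lt).
Proof.
  destruct Hkappa as [[irr [tr [tri wf]]] [card [reg unc]]].
  eapply main_eq; eauto.
Qed.
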